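(* Let $f:\{0,1\}^N\to\{0,1\}$ be a Boolean function and let $\tilde f:\{0,1\}^N\to\mathbb R$ be a real multilinear polynomial in $x_0,\dots,x_{N-1}$ that approximates $f$ with error probability $\epsilon$, i.e. $|f(x)-\tilde f(x)|\le\epsilon$ for all $x\in\{0,1\}^N$. Then $$\deg(\tilde f)\;\ge\;\frac14\Big(1-\frac{3\epsilon}{1+\epsilon}\Big)^2\rho_f\,N .$$
   Context: For $x\in\{0,1\}^N$, $e_i$ is the string with a single $1$ in position $i$ and $+$ is bitwise XOR. The influence of variable $i$ is $\mathrm{Inf}_i(f)=\Pr_x[f(x)\ne f(x+e_i)]$ with $x$ uniform in $\{0,1\}^N$, and the average influence is $\rho_f=\frac1N\sum_{i=0}^{N-1}\mathrm{Inf}_i(f)$. *)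

(* Defs.v *)
From HB Require Import structures.
From mathcomp Require Import all_boot all_order all_algebra.
From mathcomp Require Export mpoly.
Set Implicit Arguments. Unset Strict Implicit. Unset Printing Implicit Defensive.
Import Order.TTheory GRing.Theory Num.Theory.
Local Open Scope ring_scope.

Definition flip (N : nat) (i : 'I_N) (x : {ffun 'I_N -> bool}) : {ffun 'I_N -> bool} :=
  [ffun j => if j == i then ~~ x j else x j].

Definition influence (R : numFieldType) (N : nat)
  (f : {ffun 'I_N -> bool} -> bool) (i : 'I_N) : R :=
  #|[set x : {ffun 'I_N -> bool} | f x != f (flip i x)]|%:R / (2 ^ N)%:R.

Definition avg_influence (R : numFieldType) (N : nat)
  (f : {ffun 'I_N -> bool} -> bool) : R :=
  (\sum_(i < N) influence R f i) / N%:R.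

Definition multilinear (R : ringType) (N : nat) (p : {mpoly R[N]}) : Prop :=
  forall m, m \in msupp p -> forall i : 'I_N, (m i <= 1)%N.

(* total degree of a multivariate polynomial (msize p = 1 + deg p, 0 for p = 0) *)
Definition mpoly_deg (R : ringType) (N : nat) (p : {mpoly R[N]}) : nat :=
  (msize p).-1.

(* Main.v *)
Require Import Defs.
From HB Require Import structures.
From mathcomp Require Import all_boot all_order all_algebra.
From mathcomp Require Import mpoly.
From mathcomp Require Import ring lra zify.
Import Order.TTheory GRing.Theory Num.Theory.
Local Open Scope ring_scope.
Set Implicit Arguments. Unset Strict Implicit.

Section F.
Variable R : realFieldType.
Variable N : nat.
Notation cube := {ffun 'I_N -> bool}.

Definition sgn (b : bool) : R := if b then -1 else 1.
Definition chi (t x : cube) : R := \prod_i (if t i then sgn (x i) else 1).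
Definition hat (g : cube -> R) t := \sum_x g x * chi t x.

Lemma fact_sum (F : 'I_N -> bool -> R) :
  \sum_(x : cube) \prod_i F i (x i) = \prod_i (F i true + F i false).
Proof.
rewrite -bigA_distr_bigA; apply: eq_bigr => i _; by rewrite big_bool.
Qed.

Lemma kernel y x : \sum_t chi t y * chi t x = if y == x then (2 ^ N)%:R else 0.
Proof.
have -> : \sum_t chi t y * chi t x =
   \sum_(t : cube) \prod_i (fun i b => if b then sgn (y i) * sgn (x i) else 1) i (t i).
  apply: eq_bigr => t _; rewrite /chi -big_split /=; apply: eq_bigr => i _.
  by case: (t i); rewrite ?mulr1.
rewrite (fact_sum (fun i b => if b then sgn (y i) * sgn (x i) else 1)) /=.
case: eqP => [->|/eqP nyx].
  rewrite (eq_bigr (fun _ => 2%:R)); last first.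
    by move=> i _; case: (x i); rewrite /sgn ?mulrNN mulr1.
  by rewrite prodr_const card_ord natrX.
have [i Hi] : exists i, y i != x i.
  apply/existsP; move: nyx; apply: contraR; rewrite negb_exists => /forallP H.
  by apply/eqP/ffunP => i; move: (H i); rewrite negbK => /eqP.
rewrite (bigD1 i) //= /sgn.
by case: (y i) (x i) Hi => [] [] //= _; rewrite ?mulr1 ?mul1r addNr mul0r.
Qed.

Lemma inversion g x : \sum_t hat g t * chi t x = (2 ^ N)%:R * g x.
Proof.
rewrite /hat.
under eq_bigr do rewrite mulr_suml.
rewrite exchange_big.
under eq_bigr do (under eq_bigr do rewrite -mulrA).
under eq_bigr do rewrite -mulr_sumr kernel.
rewrite (bigD1 x) // eqxx big1 => [|y /negbTE ->]; first by rewrite mulrC; apply: addr0.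
by rewrite mulr0.
Qed.

Lemma parseval g : (2 ^ N)%:R * \sum_x g x ^+ 2 = \sum_t hat g t ^+ 2.
Proof.
rewrite mulr_sumr.
transitivity (\sum_x g x * \sum_t hat g t * chi t x).
  by apply: eq_bigr => x _; rewrite inversion expr2 mulrCA.
under eq_bigr do rewrite mulr_sumr.
rewrite exchange_big; apply: eq_bigr => t _.
rewrite expr2 [X in _ = _ * X]/hat mulr_sumr.
by apply: eq_bigr => x _; rewrite mulrCA.
Qed.

Lemma flipK (i : 'I_N) : involutive (flip i).
Proof. by move=> x; apply/ffunP => j; rewrite !ffunE; case: eqP => //; rewrite negbK. Qed.

Lemma chi_flip t i x : chi t (flip i x) = (if t i then -1 else 1) * chi t x.
Proof.
rewrite /chi (bigD1 i) // [in RHS](bigD1 i) //= mulrA; congr (_ * _).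
  by rewrite ffunE eqxx; case: (t i) (x i) => [] [] //=; rewrite /sgn ?mulr1 ?mulrNN ?mul1r.
by apply: eq_bigr => j /negbTE Hj; rewrite ffunE Hj.
Qed.

Definition Dg (g : cube -> R) i x := g x - g (flip i x).

Lemma hatD g i t : hat (Dg g i) t = if t i then 2 * hat g t else 0.
Proof.
rewrite /hat /Dg.
under eq_bigr do rewrite mulrBl.
rewrite sumrB.
rewrite [X in _ - X](reindex_inj (inv_inj (flipK i))).
under [X in _ - X]eq_bigr do rewrite flipK chi_flip.
case: (t i).
  under [X in _ - X]eq_bigr do rewrite mulN1r mulrN.
  rewrite sumrN opprK; lra.
under [X in _ - X]eq_bigr do rewrite mul1r.
by rewrite subrr.
Qed.

Definition wt (t : cube) : nat := \sum_i nat_of_bool (t i).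

Lemma energy g d : (forall t, (d < wt t)%N -> hat g t = 0) ->
  \sum_i \sum_x (Dg g i x) ^+ 2 <= 4 * d%:R * \sum_x g x ^+ 2.
Proof.
move=> Hd.
have H2 : 0 < (2 ^ N)%:R :> R by rewrite ltr0n expn_gt0.
rewrite -(ler_pM2l H2) [X in X <= _]mulr_sumr.
under eq_bigr do rewrite parseval.
under eq_bigr do under eq_bigr do rewrite hatD.
rewrite exchange_big mulrCA parseval mulr_sumr.
apply: ler_sum => t _.
have -> : \sum_i (if t i then 2 * hat g t else 0) ^+ 2 = (wt t)%:R * (4 * hat g t ^+ 2).
  rewrite /wt natr_sum mulr_suml; apply: eq_bigr => i _.
  by case: (t i); rewrite /=; ring.
have h0 : 0 <= hat g t ^+ 2 := sqr_ge0 _.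
case: (leqP (wt t) d) => hw.
  have hw' : (wt t)%:R <= d%:R :> R by rewrite ler_nat.
  nra.
by rewrite Hd // expr2 !mulr0.
Qed.

Lemma eq_hat g1 g2 t : (forall x, g1 x = g2 x) -> hat g1 t = hat g2 t.
Proof. by move=> H; apply: eq_bigr => x _; rewrite H. Qed.

Lemma hat_mono (e : 'I_N -> nat) (t : cube) i : t i -> e i = 0%N ->
  hat (fun x => \prod_j ((x j)%:R : R) ^+ e j) t = 0.
Proof.
move=> ti ei.
rewrite /hat /chi.
under eq_bigr do rewrite -big_split /=.
rewrite (fact_sum (fun j b => (b%:R : R) ^+ e j * (if t j then sgn b else 1))).
by rewrite (bigD1 i) //= ti ei !expr0 /sgn !mul1r addNr mul0r.
Qed.

Lemma hat_sum (I : eqType) (s : seq I) (c : I -> R) (F : I -> cube -> R) t :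
  hat (fun x => \sum_(m <- s) c m * F m x) t = \sum_(m <- s) c m * hat (F m) t.
Proof.
rewrite /hat.
under eq_bigr do rewrite mulr_suml.
rewrite exchange_big; apply: eq_bigr => m _.
rewrite mulr_sumr; apply: eq_bigr => x _; by rewrite mulrA.
Qed.

Lemma hatB g1 g2 t : hat (fun x => g1 x - g2 x) t = hat g1 t - hat g2 t.
Proof.
by rewrite /hat -sumrB; apply: eq_bigr => x _; rewrite mulrBl.
Qed.

Lemma hatZ c g t : hat (fun x => c * g x) t = c * hat g t.
Proof.
by rewrite /hat mulr_sumr; apply: eq_bigr => x _; rewrite mulrA.
Qed.

Lemma hat_meval (ft : {mpoly R[N]}) t : (mpoly_deg ft < wt t)%N ->
  hat (fun x => meval (fun i => ((x i)%:R : R)) ft) t = 0.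
Proof.
move=> Ht.
rewrite (eq_hat _ (fun x => mevalE _ _)) hat_sum big_seq big1 // => m Hm.
have [i /andP [ti /eqP mi]] : exists i, t i && (m i == 0%N).
  apply/existsP; apply: contraLR Ht; rewrite negb_exists => /forallP H.
  rewrite -leqNgt.
  have : (mdeg m < msize ft)%N by apply: msize_mdeg_lt.
  rewrite /mpoly_deg; case: (msize ft) => // k; rewrite ltnS => hk.
  apply: leq_trans hk; rewrite mdegE /wt; apply: leq_sum => j _.
  by move: (H j); case: (t j) => //=; rewrite lt0n.
by rewrite (hat_mono ti mi) mulr0.
Qed.

End F.

Theorem theorem6 (R : realFieldType) (N : nat)
    (f : {ffun 'I_N -> bool} -> bool) (ft : {mpoly R[N]}) (eps : R) :
  multilinear ft ->
  eps < 1 / 2 ->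
  (forall x : {ffun 'I_N -> bool},
      `| (f x)%:R - meval (fun i => (x i)%:R) ft | <= eps) ->
  1 / 4 * (1 - 3 * eps / (1 + eps)) ^+ 2 * avg_influence R f * N%:R
    <= (mpoly_deg ft)%:R.
Proof.
move=> _ heps Hf.
set p := fun x : {ffun 'I_N -> bool} => meval (fun i => ((x i)%:R : R)) ft.
have Hb : forall x, - eps <= (if f x then 1 else 0) - p x <= eps.
  move=> x; rewrite -ler_norml; move: (Hf x); rewrite /p.
  by case: (f x).
have e0 : 0 <= eps.
  by case/andP: (Hb [ffun => false]) => h1 h2; lra.
set g := fun x => p x - 1 / 2.
set d := mpoly_deg ft.
have Hg : forall t, (d < wt t)%N -> hat g t = 0.
  move=> t Ht; rewrite /g hatB.
  rewrite (@eq_hat _ _ (fun _ => 1 / 2) (fun x => 1 / 2 * \prod_j ((x j)%:R : R) ^+ 0%N)); last first.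
    by move=> x; rewrite big1 ?mulr1 // => j _; rewrite expr0.
  have [i ti] : exists i, t i.
    apply/existsP; apply: contraLR Ht; rewrite negb_exists => /forallP H.
    rewrite -leqNgt /wt big1 // => j _; by move: (H j); case: (t j).
  by rewrite hatZ (@hat_mono R N (fun _ => 0%N) t i ti (erefl _)) mulr0 hat_meval // subr0.
have E := energy Hg.
set K : R := (2 ^ N)%:R.
have K0 : 0 < K by rewrite ltr0n expn_gt0.
set A := fun i : 'I_N => [set x : {ffun 'I_N -> bool} | f x != f (flip i x)].
have Low : forall i, (1 - 2 * eps) ^+ 2 * #|A i|%:R <= \sum_x (Dg g i x) ^+ 2.
  move=> i.
  have -> : (1 - 2 * eps) ^+ 2 * #|A i|%:R =
     \sum_x (if x \in A i then (1 - 2 * eps) ^+ 2 else 0).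
    by rewrite -big_mkcond sumr_const mulr_natr.
  apply: ler_sum => x _.
  case: ifP => hx; last by apply: sqr_ge0.
  move: hx; rewrite inE => hx.
  have h1 := Hb x; have h2 := Hb (flip i x).
  rewrite /Dg /g.
  move: hx h1 h2; case: (f x); case: (f (flip i x)) => // _ /andP [h1 h2] /andP [h3 h4]; nra.
have Up : \sum_x g x ^+ 2 <= K * (1 / 2 + eps) ^+ 2.
  apply: le_trans (_ : _ <= \sum_(x : {ffun 'I_N -> bool}) (1 / 2 + eps) ^+ 2) _.
    apply: ler_sum => x _; have := Hb x; rewrite /g; case: (f x) => /andP[h1 h2]; nra.
  have hc : #|{ffun 'I_N -> bool}| = (2 ^ N)%N by rewrite card_ffun card_bool card_ord.
  by rewrite sumr_const hc /K mulr_natl.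
set S := \sum_i (#|A i|%:R : R).
have HS : (1 - 2 * eps) ^+ 2 * S <= 4 * d%:R * (K * (1 / 2 + eps) ^+ 2).
  rewrite /S mulr_sumr; apply: le_trans (ler_sum _ (fun i _ => Low i)) _.
  apply: le_trans E _; apply: ler_wpM2l => //.
  by rewrite mulr_ge0 // ler0n.
rewrite -mulrA.
have -> : avg_influence R f * N%:R = S / K / N%:R * N%:R.
  by rewrite /avg_influence /influence -mulr_suml.
have [->|nz] := eqVneq (N%:R : R) 0; first by rewrite !mulr0 ler0n.
rewrite divfK //.
set T := S / K.
have HST : S = T * K by rewrite /T divfK // gt_eqF.
have HT : (1 - 2 * eps) ^+ 2 * T <= d%:R * (1 + 2 * eps) ^+ 2.
  have : (1 - 2 * eps) ^+ 2 * T * K <= d%:R * (1 + 2 * eps) ^+ 2 * K.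
    have -> : (1 - 2 * eps) ^+ 2 * T * K = (1 - 2 * eps) ^+ 2 * S by rewrite HST; ring.
    apply: (le_trans HS); rewrite le_eqVlt; apply/orP; left; apply/eqP.
    by field.
  by rewrite (ler_pM2r K0).
have e1 : 0 < 1 + eps by lra.
have hq : 1 - 3 * eps / (1 + eps) = (1 - 2 * eps) / (1 + eps).
  by field; rewrite gt_eqF.
rewrite hq.
have -> : 1 / 4 * ((1 - 2 * eps) / (1 + eps)) ^+ 2 * T
   = ((1 - 2 * eps) ^+ 2 * T) / (4 * (1 + eps) ^+ 2).
  by field; rewrite gt_eqF.
rewrite ler_pdivrMr; last by rewrite mulr_gt0 // exprn_gt0.
have d0 : 0 <= d%:R :> R by rewrite ler0n.
apply: le_trans HT _.
nra.
Qed.
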